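(* For every integer $n>0$, $$A(n)=B(n)=C(n+1)=\tfrac12 D(n+1)=E(n+2)=F(n+1).$$
   Context: The partition functions are defined as follows. - $A(n)$ is the number of partitions of $n$ into distinct parts. - $B(n)$ is the number of partitions of $n$ into odd parts. - $C(n)$ is the number of partitions of $n$ whose largest part is even and whose parts not exceeding half of the largest part are distinct. - $D(n)$ is the number of partitions of $n$ into non-negative parts (part $0$ allowed) in which the smallest part appears exactly twice and no other part is repeated. - $E(n)$ is the number of partitions of $n$ in which all parts are odd and the largest part appears exactly once. - $F(n)$ is the number of partitions of $n$ whose largest part is even and appears exactly once, all other parts being odd. *)

(* Defs.v *)
From mathcomp Require Import all_boot.
Set Implicit Arguments. Unset Strict Implicit. Unset Printing Implicit Defensive.

(* A partition is represented by the nonincreasing list of its parts. *)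

Fixpoint bounded_seqs (L M : nat) : seq (seq nat) :=
  [::] :: (if L is L'.+1 then
             [seq x :: s | x <- iota 0 M, s <- bounded_seqs L' M]
           else [::]).

Definition is_partition (n : nat) (s : seq nat) : bool :=
  [&& sorted geq s, all (fun x => 0 < x) s & sumn s == n].

Definition is_partition0 (n : nat) (s : seq nat) : bool :=
  sorted geq s && (sumn s == n).

(* Every partition of n (even with parts 0 allowed, as long as at most two
   parts are 0) has at most n+2 parts, each at most n, so it occurs in
   [bounded_seqs n.+2 n.+1]. *)
Definition npart (isp : nat -> seq nat -> bool) (P : pred (seq nat)) (n : nat) : nat :=
  count (fun s => isp n s && P s) (bounded_seqs n.+2 n.+1).

Definition largest (s : seq nat) : nat := head 0 s.
Definition smallest (s : seq nat) : nat := last 0 s.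

Definition A (n : nat) : nat := npart is_partition (fun s => uniq s) n.

Definition B (n : nat) : nat := npart is_partition (fun s => all odd s) n.

Definition C (n : nat) : nat :=
  npart is_partition
    (fun s => [&& s != [::], ~~ odd (largest s)
                & uniq [seq x <- s | x <= (largest s)./2]]) n.

Definition D (n : nat) : nat :=
  npart is_partition0
    (fun s => [&& s != [::], count_mem (smallest s) s == 2
                & uniq [seq x <- s | x != smallest s]]) n.

Definition E (n : nat) : nat :=
  npart is_partition
    (fun s => [&& s != [::], all odd s & count_mem (largest s) s == 1]) n.

Definition F (n : nat) : nat :=
  npart is_partition
    (fun s => match s with
              | a :: t => [&& ~~ odd a, a \notin t & all odd t]
              | [::] => false
              end) n.

(* Main.v *)
Require Import Defs.
From mathcomp Require Import all_boot zify.
Set Implicit Arguments. Unset Strict Implicit. Unset Printing Implicit Defensive.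


Lemma mem_bs L M s : (s \in bounded_seqs L M) = (size s <= L) && all (fun x => x < M) s.
Proof.
elim: L s => [|L IH] [|x s] //=.
rewrite in_cons /=; apply/allpairsP/idP.
  case=> [[y t]] /= [] hy ht [-> ->].
  rewrite mem_iota in hy; rewrite IH in ht.
  case/andP: hy => _ hy; case/andP: ht => h1 h2.
  by rewrite /= ltnS h1 hy h2.
move=> /andP[h1 /andP[h2 h3]]; exists (x, s) => /=; split=> //.
  by rewrite mem_iota.
by rewrite IH -ltnS h1.
Qed.

Lemma uniq_bs L M : uniq (bounded_seqs L M).
Proof.
elim: L => [|L IH] //=.
apply/andP; split.
  by apply/negP => /allpairsP[[y t]] [].
apply: allpairs_uniq => //; first exact: iota_uniq.
by move=> [a b] [c d] _ _ /= [-> ->].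
Qed.

Lemma count_bij (T : eqType) (l1 l2 : seq T) (P Q : pred T) (f g : T -> T) :
  uniq l1 -> uniq l2 -> (forall x, P x -> x \in l1) -> (forall y, Q y -> y \in l2) ->
  (forall x, P x -> Q (f x) /\ g (f x) = x) ->
  (forall y, Q y -> P (g y) /\ f (g y) = y) ->
  count P l1 = count Q l2.
Proof.
move=> u1 u2 i1 i2 hf hg.
rewrite -!size_filter -(size_map f).
apply: perm_size; apply: uniq_perm.
- rewrite map_inj_in_uniq ?filter_uniq //.
  move=> x y; rewrite !mem_filter => /andP[px _] /andP[py _] e.
  by rewrite -(hf x px).2 -(hf y py).2 e.
- exact: filter_uniq.
move=> y; apply/mapP/idP.
  by case=> x; rewrite mem_filter => /andP[px _] ->; rewrite mem_filter (hf x px).1 i2 // (hf x px).1.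
rewrite mem_filter => /andP[qy _]; exists (g y); last by rewrite (hg y qy).2.
by rewrite mem_filter (hg y qy).1 i1 // (hg y qy).1.
Qed.


Lemma memE (T : eqType) (x : T) (s : seq T) : (x \in s) = (0 < count_mem x s).
Proof. by rewrite -has_count has_pred1. Qed.

Lemma cnt_sort x s : count_mem x (sort geq s) = count_mem x s.
Proof. by apply/permP; rewrite perm_sort. Qed.

Lemma cnt_filter (P : pred nat) x s : count_mem x (filter P s) = if P x then count_mem x s else 0.
Proof.
rewrite count_filter; case: ifP => hP.
  by apply: eq_count => y /=; case: eqP => // ->; rewrite hP.
by apply/eqP; rewrite -leqn0 leqNgt -has_count; apply/hasP => -[y _ /= /andP[/eqP -> ]]; rewrite hP.
Qed.

Lemma cnt_rem (x y : nat) (s : seq nat) : count_mem x (rem y s) = count_mem x s - (x == y).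
Proof.
elim: s => [|a s IH] /=; first by [].
case: (a =P y) => [->|h] /=.
  by case: (y =P x) => [->|h2]; rewrite ?eqxx /=; lia.
rewrite IH; move: h; case: (a =P x) => [->|]; case: (x =P y) => //= *; rewrite ?subn0 ?add0n ?addnBA //; lia.
Qed.

Lemma sorted_cnt_eq (s1 s2 : seq nat) : sorted geq s1 -> sorted geq s2 ->
  (forall x, count_mem x s1 = count_mem x s2) -> s1 = s2.
Proof.
move=> h1 h2 hc; apply: (sorted_eq (leT := geq)) => //.
- by move=> a b c /= h3 h4; apply: leq_trans h4 h3.
- by move=> a b /andP[h3 h4]; apply/eqP; rewrite eqn_leq; apply/andP; split.
by apply/allP => x _; apply/eqP; apply: hc.
Qed.

Lemma all_cnt (P : pred nat) (s : seq nat) : all P s = true <-> (forall x, 0 < count_mem x s -> P x).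
Proof.
split.
  by move/allP => h x; rewrite -memE; apply: h.
by move=> h; apply/allP => x; rewrite memE; apply: h.
Qed.

Lemma uniq_cnt (s : seq nat) : uniq s = true <-> (forall x, count_mem x s <= 1).
Proof.
split.
  by move=> u x; rewrite count_uniq_mem //; case: (x \in s).
move=> h; apply: count_mem_uniq => x; rewrite memE; move: (h x); lia.
Qed.

Lemma sumn_cnt (v : nat) (s : seq nat) : sumn s = sumn (filter (predC1 v) s) + v * count_mem v s.
Proof.
elim: s => [|a s IH] /=; first by rewrite muln0.
case: (a =P v) => [->|/eqP h]; rewrite /= ?eqxx ?h ?(negbTE h) IH /=; lia.
Qed.

Lemma sumn_rem (v : nat) (s : seq nat) : v \in s -> sumn s = sumn (rem v s) + v.
Proof.
elim: s => [|a s IH] //=.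
rewrite in_cons; case: (a =P v) => [->|h] /=; first by rewrite addnC.
case: (v =P a) => [e|_] /=; first by case: h.
by move/IH => ->; rewrite addnA.
Qed.

Lemma sumn_pos (s : seq nat) : sumn (filter (fun x => 0 < x) s) = sumn s.
Proof. by elim: s => [|[|a] s IH] //=; rewrite IH. Qed.

Lemma sumn_sort (s : seq nat) : sumn (sort geq s) = sumn s.
Proof. by apply: perm_sumn; rewrite perm_sort. Qed.

Lemma sorted_sort (s : seq nat) : sorted geq (sort geq s).
Proof. by apply: sort_sorted => a b; apply: leq_total. Qed.

Lemma mem_le_sumn (x : nat) s : x \in s -> x <= sumn s.
Proof.
elim: s => [|a s IH] //=; rewrite in_cons => /orP[/eqP ->|/IH]; first exact: leq_addr.
by move=> h; apply: leq_trans h (leq_addl _ _).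
Qed.

Lemma size_le_sumn (s : seq nat) : size s <= sumn s + count_mem 0 s.
Proof.
elim: s => [|[|a] s IH] //=; move: IH; move: (count _ s) (sumn s) (size s) => c d e; lia.
Qed.

Lemma part_in n s : is_partition n s -> s \in bounded_seqs n.+2 n.+1.
Proof.
case/and3P => _ hp /eqP hs; rewrite mem_bs; apply/andP; split.
  have h0 : count_mem 0 s = 0.
    by apply/eqP; rewrite -leqn0 leqNgt -memE; apply/negP => /(allP hp).
  by have := size_le_sumn s; rewrite h0 hs; move: (size s) => k; lia.
by apply/allP => x /mem_le_sumn; rewrite hs ltnS.
Qed.

Lemma npart_bij N M (P Q : pred (seq nat)) (f g : seq nat -> seq nat) :
  (forall s, is_partition N s -> P s -> [/\ is_partition M (f s), Q (f s) & g (f s) = s]) ->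
  (forall s, is_partition M s -> Q s -> [/\ is_partition N (g s), P (g s) & f (g s) = s]) ->
  npart is_partition P N = npart is_partition Q M.
Proof.
move=> hf hg; apply: (count_bij (f := f) (g := g)); rewrite ?uniq_bs //.
- by move=> x /andP[/part_in].
- by move=> x /andP[/part_in].
- by move=> x /andP[h1 h2]; have [-> -> ->] := hf x h1 h2.
- by move=> x /andP[h1 h2]; have [-> -> ->] := hg x h1 h2.
Qed.

Lemma npart_ext N (P Q : pred (seq nat)) :
  (forall s, is_partition N s -> P s = Q s) -> npart is_partition P N = npart is_partition Q N.
Proof.
move=> h; apply: eq_count => s /=; case e: (is_partition N s) => //=; exact: h.
Qed.

Lemma sm_mem (s : seq nat) : s != [::] -> smallest s \in s.
Proof. by case: s => // a s _; rewrite /smallest /=; apply: mem_last. Qed.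

Lemma last_min_path (a : nat) s : path geq a s -> forall x, x \in a :: s -> last a s <= x.
Proof.
elim: s a => [|b s IH] a /=.
  by move=> _ x; rewrite inE => /eqP ->.
move=> /andP[hab hp] x; rewrite in_cons => /orP[/eqP ->|hx].
  by apply: leq_trans hab; apply: IH => //; rewrite inE eqxx.
exact: IH.
Qed.

Lemma sm_min (s : seq nat) x : sorted geq s -> x \in s -> smallest s <= x.
Proof. by case: s => [|a s] // hs hx; rewrite /smallest /=; exact: last_min_path hs x hx. Qed.

Lemma sm_eq (s : seq nat) z : sorted geq s -> z \in s -> (forall x, x \in s -> z <= x) -> smallest s = z.
Proof.
move=> hs hz hm; apply/eqP; rewrite eqn_leq sm_min //=; apply: hm.
by apply: sm_mem; case: s hz {hs}.
Qed.


Lemma geq_tr : transitive geq.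
Proof. by move=> a b c /= h1 h2; apply: leq_trans h2 h1. Qed.

Lemma sorted_cons (a : nat) t : sorted geq (a :: t) = all (fun x => x <= a) t && sorted geq t.
Proof. by rewrite /= path_sortedE //; exact: geq_tr. Qed.

Lemma part_cons n (a : nat) t : is_partition n (a :: t) =
  [&& all (fun x => x <= a) t, sorted geq t, 0 < a, all (fun x => 0 < x) t & a + sumn t == n].
Proof. by rewrite /is_partition sorted_cons /=; case: (all _ t); case: (sorted _ t); case: (0 < a). Qed.

Definition incr_head (s : seq nat) := if s is a :: t then a.+1 :: t else s.
Definition decr_head (s : seq nat) := if s is a :: t then a.-1 :: t else s.

Lemma BF n : 0 < n -> B n = F n.+1.
Proof.
move=> hn; apply: (npart_bij (f := incr_head) (g := decr_head)).
- case=> [|a t]; first by case/and3P => _ _ /eqP h; move: hn; rewrite -h.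
  rewrite part_cons /= => /and5P[h1 h2 h3 h4 /eqP h5] /andP[oa ot].
  rewrite part_cons ltn0Sn h2 h4 ot oa /= -h5 addSn eqxx !andbT.
  split=> //.
    by apply/allP => x /(allP h1) hx; apply: leq_trans hx (leqnSn _).
  by apply/negP => /(allP h1); rewrite ltnn.
- case=> [|a t] //.
  rewrite part_cons /= => /and5P[h1 h2 h3 h4 /eqP h5] /and3P[ea na ot].
  have a2 : 1 < a by case: a ea h3 {h1 h5 na} => [|[|]].
  rewrite /= part_cons h2 h4 ot (prednK h3) andbT; split=> //.
  + have -> : a.-1 + sumn t == n by apply/eqP; move: h5; move: (sumn t) => k; lia.
    have -> : 0 < a.-1 by lia.
    rewrite !andbT; apply/allP => x hx; have /= := allP h1 x hx; have /= := allP ot x hx.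
    have : x != a by apply: contraNneq na => <-.
    move: ea; clear; lia.
    move: ea h3; clear; lia.
Qed.

Lemma EF n : 0 < n -> E n.+2 = F n.+1.
Proof.
move=> hn; apply: (npart_bij (f := decr_head) (g := incr_head)).
- case=> [|a t] //.
  rewrite part_cons /= eqxx => /and5P[h1 h2 h3 h4 /eqP h5] /andP[/andP[oa ot] /eqP c1].
  have na : a \notin t by rewrite -has_pred1 has_count; move: c1; move: (count _ t) => k; lia.
  have tl : all (fun x => x < a) t.
    by apply/allP => x hx; rewrite ltn_neqAle (allP h1 x hx) andbT; apply: contraNneq na => <-.
  have a2 : 1 < a.
    case: (ltnP 1 a) => // a1.
    case: t h4 tl h5 {h1 h2 na c1 ot} => [|b t'] /=.
      by move=> _ _; move: h3 a1 hn; clear; lia.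
    case/andP=> hb _ /andP[hb2 _] _; move: hb hb2 h3 a1; clear; lia.
  rewrite part_cons h2 h4 ot /=.
  have e1 : a.-1 + sumn t == n.+1 by apply/eqP; move: h5; move: (sumn t) => k; lia.
  rewrite e1 /= (prednK (ltnW a2)) !andbT; split=> //.
  + rewrite (_ : 0 < a.-1) ?andbT; last by lia.
    by apply/allP => x /(allP tl); lia.
  + apply/andP; split; first by move: oa a2; clear; lia.
    by apply/negP => /(allP ot) /=; move: oa a2; clear; lia.
- case=> [|a t] //.
  rewrite part_cons /= => /and5P[h1 h2 h3 h4 /eqP h5] /and3P[ea na ot].
  have c0 : count_mem a.+1 t = 0.
    apply/eqP; rewrite -leqn0 leqNgt -has_count has_pred1; apply/negP => /(allP h1) /=; rewrite ltnn //.
  rewrite part_cons h2 h4 ot eqxx c0 /= addSn h5 eqxx !andbT; split=> //.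
  + by apply/allP => x /(allP h1) hx; apply: leq_trans hx (leqnSn _).
Qed.


Definition Zp (m j : nat) (t : seq nat) : bool :=
  all (fun x => [&& x <= m.*2, odd x || (x <= j.*2) & ((x <= j) && (x <= m)) ==> (count_mem x t <= 1)]) t.

Definition mv (j : nat) (t : seq nat) :=
  sort geq (nseq (count_mem j.*2 t).*2 j ++ filter (predC1 j.*2) t).
Definition unmv (j : nat) (u : seq nat) :=
  sort geq (nseq ((count_mem j u) %/ 2) j.*2 ++ nseq ((count_mem j u) %% 2) j ++ filter (predC1 j) u).

Lemma cnt_nseq (x n y : nat) : count_mem x (nseq n y) = if y == x then n else 0.
Proof. by rewrite count_nseq /=; case: (y == x); rewrite ?mul1n ?mul0n. Qed.

Lemma cnt_mv j x t : count_mem x (mv j t) =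
  (if j == x then (count_mem j.*2 t).*2 else 0) + (if x == j.*2 then 0 else count_mem x t).
Proof. by rewrite /mv cnt_sort count_cat cnt_nseq cnt_filter /=; case: (x == j.*2). Qed.

Lemma cnt_unmv j x u : count_mem x (unmv j u) =
  (if j.*2 == x then count_mem j u %/ 2 else 0) + (if j == x then count_mem j u %% 2 else 0)
   + (if x == j then 0 else count_mem x u).
Proof. by rewrite /unmv cnt_sort !count_cat !cnt_nseq cnt_filter /= addnA; case: (x == j). Qed.

Lemma ZpP m j t : Zp m j t = true <-> forall x, 0 < count_mem x t ->
  [/\ x <= m.*2, odd x || (x <= j.*2) & ((x <= j) && (x <= m)) -> count_mem x t <= 1].
Proof.
rewrite /Zp all_cnt; split=> h x hx; have := h x hx.
  by case/and3P => h1 h2 /implyP h3.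
by case=> h1 h2 h3; rewrite h1 h2 /=; apply/implyP.
Qed.

Lemma posP t : all (fun x => 0 < x) t = true <-> count_mem 0 t = 0.
Proof.
rewrite all_cnt; split.
  by move=> h; apply/eqP; rewrite -leqn0 leqNgt; apply/negP => /h.
by move=> h [|x] //; rewrite h.
Qed.

Ltac cs := repeat match goal with |- context [ (?a == ?b) ] => case: (a =P b) => /= ?; try subst end.
Ltac gen_cnt := repeat match goal with |- context [count ?P ?s] => let c := fresh "c" in move: (count P s) => c end.

Lemma mv_ok m j t : 0 < j -> j <= m -> sorted geq t -> count_mem 0 t = 0 -> Zp m j t ->
  [/\ count_mem 0 (mv j t) = 0, sumn (mv j t) = sumn t, Zp m j.-1 (mv j t) & unmv j (mv j t) = t].
Proof.
move=> j0 jm st p0 /ZpP Z.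
have cj : count_mem j t <= 1.
  case: (ltnP 0 (count_mem j t)) => h; last by lia.
  by have [_ _ h3] := Z j h; apply: h3; lia.
split.
- by rewrite cnt_mv p0; cs; lia.
- rewrite /mv sumn_sort sumn_cat sumn_nseq (sumn_cnt j.*2 t).
  move: (sumn _) (count_mem _ t) => a b; lia.
- apply/ZpP => x; rewrite cnt_mv => hx.
  case: (x =P j) => [e|xj].
    subst x; split; try lia.
  move: hx; rewrite (_ : (j == x) = false); last by apply/eqP => e; apply: xj.
  case: (x =P j.*2) => [e|x2j] //= hx.
  have [h1 h2 h3] := Z x hx.
  split=> //; first by lia.
  by move=> h; apply: h3; lia.
- apply: sorted_cnt_eq; [by rewrite /unmv; apply: sort_sorted => a b; apply: leq_total | exact: st | ].
  move=> x; rewrite cnt_unmv !cnt_mv; move: cj; cs; gen_cnt; lia.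
Qed.

Lemma unmv_ok m j u : 0 < j -> j <= m -> sorted geq u -> count_mem 0 u = 0 -> Zp m j.-1 u ->
  [/\ count_mem 0 (unmv j u) = 0, sumn (unmv j u) = sumn u, Zp m j (unmv j u) & mv j (unmv j u) = u].
Proof.
move=> j0 jm st p0 /ZpP Z.
have c2j : count_mem j.*2 u = 0.
  case: (ltnP 0 (count_mem j.*2 u)) => h; last by lia.
  by have [_ h2 _] := Z _ h; move: h2; lia.
split.
- by rewrite cnt_unmv p0; cs; lia.
- rewrite /unmv sumn_sort !sumn_cat !sumn_nseq (sumn_cnt j u).
  move: (sumn _) (count_mem _ u) => a b; lia.
- apply/ZpP => x; rewrite cnt_unmv => hx.
  case: (x =P j) => [e|xj].
    subst x; move: hx; cs; move=> hx; split; try lia.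
  case: (x =P j.*2) => [e|x2j].
    subst x; move: hx; cs; split; try lia.
  move: hx; rewrite (_ : (j == x) = false); last by apply/eqP => e; apply: xj.
  rewrite (_ : (j.*2 == x) = false); last by apply/eqP => e; apply: x2j.
  rewrite (_ : (x == j) = false) /=; last by apply/eqP.
  move=> hx; have [h1 h2 h3] := Z x hx.
  split=> //; first by lia.
  by move=> h; apply: h3; lia.
- apply: sorted_cnt_eq; [by rewrite /mv; apply: sort_sorted => a b; apply: leq_total | exact: st | ].
  move=> x; rewrite cnt_mv !cnt_unmv; move: c2j; cs; gen_cnt; lia.
Qed.


Lemma part_pos n s : is_partition n s -> count_mem 0 s = 0.
Proof. by case/and3P => _ /posP. Qed.

Lemma mk_part n s : sorted geq s -> count_mem 0 s = 0 -> sumn s = n -> is_partition n s.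
Proof. by move=> h1 /posP h2 h3; rewrite /is_partition h1 h2 h3 eqxx. Qed.

Lemma Zstep n j : 0 < j <= n ->
  npart is_partition (Zp n j) n = npart is_partition (Zp n j.-1) n.
Proof.
case/andP=> j0 jn; apply: (npart_bij (f := mv j) (g := unmv j)).
- move=> s hs hz; have [h1 h2 h3 h4] := mv_ok j0 jn (proj1 (andP hs)) (part_pos hs) hz.
  split=> //; apply: mk_part => //; first by rewrite /mv; apply: sort_sorted => a b; apply: leq_total.
  by rewrite h2; case/and3P: hs => _ _ /eqP.
- move=> s hs hz; have [h1 h2 h3 h4] := unmv_ok j0 jn (proj1 (andP hs)) (part_pos hs) hz.
  split=> //; apply: mk_part => //; first by rewrite /unmv; apply: sort_sorted => a b; apply: leq_total.
  by rewrite h2; case/and3P: hs => _ _ /eqP.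
Qed.

Lemma Zchain n j : j <= n -> npart is_partition (Zp n j) n = npart is_partition (Zp n 0) n.
Proof.
elim: j => [|j IH] // jn.
by rewrite (@Zstep n j.+1) ?jn //= IH // ltnW.
Qed.

Lemma part_le n s x : is_partition n s -> 0 < count_mem x s -> 0 < x <= n.
Proof.
case/and3P => _ hp /eqP hs hx.
have xin : x \in s by rewrite -has_pred1 has_count.
by rewrite (allP hp x xin) /= -hs mem_le_sumn.
Qed.

Lemma AZ n : A n = npart is_partition (Zp n n) n.
Proof.
apply: npart_ext => s hs; apply/idP/idP => h.
- apply/ZpP => x hx; have := part_le hs hx; move/uniq_cnt: h => /(_ x) h1.
  split=> //; lia.
- apply/uniq_cnt => x; case: (ltnP 0 (count_mem x s)) => hx; last by move: hx; gen_cnt; lia.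
  have := part_le hs hx; move/ZpP: h => /(_ x hx) [_ _ h3] hxn; apply: h3; lia.
Qed.

Lemma BZ n : B n = npart is_partition (Zp n 0) n.
Proof.
apply: npart_ext => s hs; apply/idP/idP => h.
- apply/ZpP => x hx; have := part_le hs hx; move/all_cnt: h => /(_ x hx) h1.
  by split; [lia| rewrite h1 | lia].
- apply/all_cnt => x hx; have := part_le hs hx; move/ZpP: h => /(_ x hx) [_ h2 _].
  move: h2; lia.
Qed.

Theorem AB n : A n = B n.
Proof. by rewrite AZ BZ Zchain. Qed.


Definition Wp (j : nat) (s : seq nat) : bool :=
  if s is a :: t then [&& ~~ odd a, 0 < a & Zp a./2 j t] else false.
Definition Wf (j : nat) (s : seq nat) :=
  if s is a :: t then (if j <= a./2 then a :: mv j t else s) else s.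
Definition Wg (j : nat) (s : seq nat) :=
  if s is a :: t then (if j <= a./2 then a :: unmv j t else s) else s.

Lemma Zp_big m j t : m < j -> Zp m j t = Zp m j.-1 t.
Proof.
move=> mj; apply: eq_all => x /=.
case h1: (x <= m.*2) => //=.
have e1 : (x <= j.*2) = true by lia.
have e2 : (x <= j.-1.*2) = true by lia.
rewrite e1 e2 !orbT /=.
case h2: (x <= m); rewrite ?andbF ?andbT //.
have e3 : (x <= j) = true by lia.
have e4 : (x <= j.-1) = true by lia.
by rewrite e3 e4.
Qed.

Lemma Zp_le m j t : Zp m j t -> all (fun x => x <= m.*2) t.
Proof. by move/allP => h; apply/allP => x /h /and3P[]. Qed.

Lemma even_half a : ~~ odd a -> a./2.*2 = a.
Proof. by move=> h; lia. Qed.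

Lemma Wstep N j : 0 < j ->
  npart is_partition (Wp j) N = npart is_partition (Wp j.-1) N.
Proof.
move=> j0; apply: (npart_bij (f := Wf j) (g := Wg j)).
- case=> [|a t] //; rewrite part_cons => /and5P[h1 h2 h3 h4 /eqP h5] /and3P[ea _ hz] /=.
  case: (leqP j a./2) => ja; last first.
    have hz' : Zp a./2 j.-1 t by rewrite -Zp_big.
    by rewrite /= part_cons h1 h2 h3 h4 h5 eqxx ea hz' leqNgt ja.
  have [k1 k2 k3 k4] := mv_ok j0 ja h2 (proj1 (posP t) h4) hz.
  split.
  + rewrite part_cons k2 h5 eqxx h3 (proj2 (posP _) k1) andbT /=.
    rewrite (_ : sorted geq (mv j t)) /=; last by rewrite /mv; apply: sort_sorted => x y; apply: leq_total.
    by have := Zp_le k3; rewrite even_half // andbT.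
  + by rewrite /= ea h3.
  + by rewrite /= ja k4.
- case=> [|a t] //; rewrite part_cons => /and5P[h1 h2 h3 h4 /eqP h5] /and3P[ea _ hz] /=.
  case: (leqP j a./2) => ja; last first.
    have hz' : Zp a./2 j t by rewrite Zp_big.
    by rewrite /= part_cons h1 h2 h3 h4 h5 eqxx ea hz' leqNgt ja.
  have [k1 k2 k3 k4] := unmv_ok j0 ja h2 (proj1 (posP t) h4) hz.
  split.
  + rewrite part_cons k2 h5 eqxx h3 (proj2 (posP _) k1) andbT /=.
    rewrite (_ : sorted geq (unmv j t)) /=; last by rewrite /unmv; apply: sort_sorted => x y; apply: leq_total.
    by have := Zp_le k3; rewrite even_half // andbT.
  + by rewrite /= ea h3.
  + by rewrite /= ja k4.
Qed.

Lemma Wchain N j : npart is_partition (Wp j) N = npart is_partition (Wp 0) N.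
Proof. by elim: j => [|j IH] //; rewrite (@Wstep N j.+1). Qed.

Lemma CW N : C N = npart is_partition (Wp N) N.
Proof.
apply: npart_ext => -[|a t] // hs; rewrite /= /largest /=.
have a0 : 0 < a by case/and3P: hs => _ /andP[].
have -> : (a <= a./2) = false by lia.
case ea: (odd a) => //=; rewrite a0 /=.
have hal : all (fun x => x <= a) t by move: hs; rewrite part_cons => /and5P[].
apply/idP/idP => h.
- apply/ZpP => x hx.
  have xin : x \in t by rewrite -has_pred1 has_count.
  have := part_le hs (x := x); rewrite /= (_ : (a == x) + count_mem x t > 0) => [/(_ isT) xn|]; last by move: hx; gen_cnt; lia.
  have xa := allP hal x xin.
  move/uniq_cnt: h => /(_ x); rewrite cnt_filter => hu.
  split; [move: ea; clear -xa; lia | lia | ].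
  by move=> hh; move: hu; rewrite (_ : x <= a./2) //; lia.
- apply/uniq_cnt => x; rewrite cnt_filter; case: ifP => // xa2.
  case: (ltnP 0 (count_mem x t)) => hx; last by move: hx; gen_cnt; lia.
  have := part_le hs (x := x); rewrite /= (_ : (a == x) + count_mem x t > 0) => [/(_ isT) xn|]; last by move: hx; gen_cnt; lia.
  by move/ZpP: h => /(_ x hx) [_ _ h3]; apply: h3; lia.
Qed.

Lemma FW N : F N = npart is_partition (Wp 0) N.
Proof.
apply: npart_ext => -[|a t] // hs; rewrite /=.
have a0 : 0 < a by case/and3P: hs => _ /andP[].
case ea: (odd a) => //=; rewrite a0 /=.
have hal : all (fun x => x <= a) t by move: hs; rewrite part_cons => /and5P[].
have tpos : all (fun x => 0 < x) t by move: hs; rewrite part_cons => /and5P[].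
apply/idP/idP => h.
- case/andP: h => _ /all_cnt h; apply/ZpP => x hx.
  have xin : x \in t by rewrite -has_pred1 has_count.
  have := allP hal x xin; have := allP tpos x xin; have := h x hx; move: ea; clear => e1 e2 e3 e4; split; [lia | by rewrite e2 | lia].
- have ot : all odd t.
    apply/all_cnt => x hx; have xin : x \in t by rewrite -has_pred1 has_count.
    have := allP tpos x xin; move/ZpP: h => /(_ x hx) [_ h2 _]; move: h2; clear; lia.
  rewrite ot andbT; apply/negP => /(allP ot); by rewrite ea.
Qed.

Theorem CF N : C N = F N.
Proof. by rewrite CW FW Wchain. Qed.


Lemma in_cnt (x : nat) (s : seq nat) : 0 < count_mem x s -> x \in s.
Proof. by rewrite -has_count has_pred1. Qed.
Lemma cnt_in (x : nat) (s : seq nat) : x \in s -> 0 < count_mem x s.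
Proof. by rewrite -has_count has_pred1. Qed.

Lemma sm_char (s : seq nat) z : sorted geq s -> 0 < count_mem z s ->
  (forall x, 0 < count_mem x s -> z <= x) -> smallest s = z.
Proof.
move=> hs hz hm; apply: sm_eq => //; first exact: in_cnt.
by move=> x /cnt_in; apply: hm.
Qed.

Lemma sm_facts (s : seq nat) : sorted geq s -> s != [::] ->
  0 < count_mem (smallest s) s /\ forall x, 0 < count_mem x s -> smallest s <= x.
Proof.
move=> hs hn; split; first exact/cnt_in/sm_mem.
by move=> x /in_cnt; apply: sm_min.
Qed.

Definition pos (x : nat) := 0 < x.
Definition key (s : seq nat) := smallest (filter pos s).

Lemma sorted_pos (s : seq nat) : sorted geq s -> sorted geq (filter pos s).
Proof. by apply: sorted_filter; exact: geq_tr. Qed.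

Lemma key_char (s : seq nat) k : sorted geq s -> 0 < k -> 0 < count_mem k s ->
  (forall x, 0 < x -> 0 < count_mem x s -> k <= x) -> key s = k.
Proof.
move=> hs k0 hk hm; apply: sm_char; first exact: sorted_pos.
  by rewrite cnt_filter /pos k0.
by move=> x; rewrite cnt_filter /pos; case: ifP => // x0; apply: hm.
Qed.

Lemma key_facts (s : seq nat) : sorted geq s -> 0 < sumn s ->
  [/\ 0 < key s, 0 < count_mem (key s) s & forall x, 0 < x -> 0 < count_mem x s -> key s <= x].
Proof.
move=> hs hsum.
have hn : filter pos s != [::].
  by apply/negP => /eqP e; move: hsum; rewrite -sumn_pos (_ : filter _ s = filter pos s) // e.
have [h1 h2] := sm_facts (sorted_pos hs) hn.
move: h1; rewrite /key cnt_filter; case: ifP => // kp h1.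
split=> // x x0 hx; apply: h2; by rewrite cnt_filter /pos x0.
Qed.

Definition Dp (s : seq nat) : bool :=
  [&& s != [::], count_mem (smallest s) s == 2 & uniq [seq x <- s | x != smallest s]].

Lemma Dp_facts s : sorted geq s -> Dp s ->
  [/\ count_mem (smallest s) s = 2, (forall x, 0 < count_mem x s -> smallest s <= x)
    & forall x, x != smallest s -> count_mem x s <= 1].
Proof.
move=> hs /and3P[hn /eqP h2 /uniq_cnt hu]; split=> //.
  by have [] := sm_facts hs hn.
by move=> x hx; have := hu x; rewrite cnt_filter hx.
Qed.

Lemma Dp_mk s z : sorted geq s -> count_mem z s = 2 -> (forall x, 0 < count_mem x s -> z <= x) ->
  (forall x, x != z -> count_mem x s <= 1) -> Dp s.
Proof.
move=> hs hz hm hu.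
have e : smallest s = z by apply: sm_char => //; rewrite hz.
rewrite /Dp e hz eqxx /=; apply/andP; split.
  by apply/negP => /eqP es; move: hz; rewrite es.
apply/uniq_cnt => x; rewrite cnt_filter; case: ifP => // hx; exact: hu.
Qed.

Lemma count_split (T : Type) (a b : pred T) l :
  count a l = count (fun x => a x && b x) l + count (fun x => a x && ~~ b x) l.
Proof. by elim: l => [|x l IH] //=; rewrite IH; case: (a x); case: (b x) => //=; lia. Qed.

Lemma Dpart_in N s : is_partition0 N s -> Dp s -> s \in bounded_seqs N.+2 N.+1.
Proof.
move=> /andP[hs /eqP hsum] hd; have [h1 h2 h3] := Dp_facts hs hd.
rewrite mem_bs; apply/andP; split.
  have : count_mem 0 s <= 2.
    case: (ltnP 0 (count_mem 0 s)) => h0; last by move: h0; gen_cnt; lia.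
    have := h2 0 h0; rewrite leqn0 => /eqP e; move: h1; rewrite e; gen_cnt; lia.
  have := size_le_sumn s; rewrite hsum; move: (size s) (count _ s) => a b; lia.
by apply/allP => x /mem_le_sumn; rewrite hsum ltnS.
Qed.

Definition h1 (l : seq nat) := sort geq (1 :: (if smallest l == 1 then [::] else [:: 0; 0]) ++ l).
Definition g1 (s : seq nat) := sort geq (rem 1 (filter pos s)).

Lemma cnt_h1 x l : count_mem x (h1 l) =
  (1 == x) + (if smallest l == 1 then 0 else (0 == x) * 2) + count_mem x l.
Proof.
rewrite /h1 cnt_sort /= count_cat; case: (smallest l == 1) => /=; first by rewrite addn0.
by case: (0 == x) => /=; lia.
Qed.

Lemma cnt_g1 x s : count_mem x (g1 s) = (if 0 < x then count_mem x s else 0) - (x == 1).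
Proof. by rewrite /g1 cnt_sort cnt_rem cnt_filter. Qed.

Lemma sm1 l : sorted geq l -> count_mem 0 l = 0 -> (smallest l == 1) = (0 < count_mem 1 l).
Proof.
move=> hs h0; case h: (0 < count_mem 1 l).
  apply/eqP; apply: sm_char => // x hx; case: x hx => // ; by rewrite h0.
apply/negP => /eqP e.
have hn : l != [::] by case: l e {hs h0 h}.
by have [hh _] := sm_facts hs hn; move: hh; rewrite e h.
Qed.

Lemma sorted_h1 l : sorted geq (h1 l).
Proof. by rewrite /h1; apply: sort_sorted => a b; apply: leq_total. Qed.
Lemma sorted_g1 l : sorted geq (g1 l).
Proof. by rewrite /g1; apply: sort_sorted => a b; apply: leq_total. Qed.

Lemma c1_fwd n s : is_partition0 n.+1 s -> Dp s -> key s == 1 ->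
  (is_partition n (g1 s) && uniq (g1 s)) /\ h1 (g1 s) = s.
Proof.
move=> /andP[hs /eqP hsum] hd /eqP hk.
have [dz dm du] := Dp_facts hs hd.
have sp : 0 < sumn s by rewrite hsum.
have [k0 kc km] := key_facts hs sp.
rewrite hk in kc.
move: dz dm du; move: (smallest s) => z dz dm du.
have z1 : z <= 1 := dm 1 kc.
have in1 : 1 \in filter pos s by apply: in_cnt; rewrite cnt_filter.
have c1le : count_mem 1 s <= 2.
  case: (eqVneq 1 z) => [e|h]; first by subst z; rewrite dz.
  by apply: leq_trans (du 1 h) _.
have c0 : count_mem 0 (g1 s) = 0 by rewrite cnt_g1.
have sm : sumn (g1 s) = n.
  by rewrite /g1 sumn_sort; have := sumn_rem in1; rewrite sumn_pos hsum; move: (sumn _) => a; lia.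
have hu : uniq (g1 s).
  apply/uniq_cnt => x; rewrite cnt_g1; have := du x; move: c1le z1.
  case: (x =P 0) => [->|x0] //=; case: (x =P 1) => [->|x1] //=; first by gen_cnt; lia.
  rewrite (_ : 0 < x) /=; last by lia.
  move=> _ z1' h; rewrite subn0; apply: h; apply/eqP => e; move: z1'; rewrite -e; lia.
split; first by rewrite /is_partition sorted_g1 (proj2 (posP _) c0) sm eqxx.
apply: sorted_cnt_eq => //; first exact: sorted_h1.
move=> x; rewrite cnt_h1 sm1 ?sorted_g1 // !cnt_g1 /=.
have : z = 0 \/ z = 1 by lia.
case=> ez; subst z.
- have c11 : count_mem 1 s = 1 by have := du 1 isT; move: kc; gen_cnt; lia.
  rewrite c11 /=; have := du x; move: dz.
  case: (x =P 0) => [->|x0] /=; first by gen_cnt; lia.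
  case: (x =P 1) => [->|x1] /=; first by rewrite c11.
  by rewrite (_ : 0 < x) //=; [gen_cnt; lia | lia].
- have c00 : count_mem 0 s = 0 by case: (ltnP 0 (count_mem 0 s)) => h; [have := dm 0 h | move: h; gen_cnt]; lia.
  rewrite dz /=.
  case: (x =P 0) => [->|x0] /=; first by rewrite c00.
  case: (x =P 1) => [->|x1] /=; first by rewrite dz.
  by rewrite (_ : 0 < x) //=; [gen_cnt; lia | lia].
Qed.

Lemma c1_bwd n l : 0 < n -> is_partition n l -> uniq l ->
  [&& is_partition0 n.+1 (h1 l), Dp (h1 l) & key (h1 l) == 1] /\ g1 (h1 l) = l.
Proof.
move=> n0 hp /uniq_cnt hu.
have p0 := part_pos hp; case/and3P: hp => hs _ /eqP hsum.
have ch : forall x, count_mem x (h1 l) =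
   (1 == x) + (if 0 < count_mem 1 l then 0 else (0 == x) * 2) + count_mem x l.
  by move=> x; rewrite cnt_h1 sm1.
have hsum' : sumn (h1 l) = n.+1.
  by rewrite /h1 sumn_sort /= sumn_cat hsum; case: ifP.
have hd : Dp (h1 l).
  case hb: (0 < count_mem 1 l).
  - have c1 : count_mem 1 l = 1 by have := hu 1; move: hb; gen_cnt; lia.
    apply: (@Dp_mk _ 1); first exact: sorted_h1.
    + by rewrite ch hb c1.
    + move=> x; rewrite ch hb; case: x => [|x] //=; by rewrite p0.
    + move=> x hx; rewrite ch hb addn0; have := hu x; move: hx; cs; gen_cnt; lia.
  - have c1 : count_mem 1 l = 0 by move: hb; gen_cnt; lia.
    apply: (@Dp_mk _ 0); first exact: sorted_h1.
    + by rewrite ch hb p0.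
    + by [].
    + move=> x hx; rewrite ch hb; have := hu x; move: hx c1; cs; gen_cnt; lia.
have hk : key (h1 l) = 1.
  apply: key_char; [exact: sorted_h1 | by [] | by rewrite ch | by move=> x; case: x].
split; first by rewrite /is_partition0 sorted_h1 hsum' hd hk !eqxx.
apply: sorted_cnt_eq; [exact: sorted_g1 | exact: hs | ].
move=> x; rewrite cnt_g1 ch; have := hu x; move: p0; cs; repeat case: ifP; gen_cnt; lia.
Qed.

Definition h2 (l : seq nat) :=
  sort geq ((smallest l).+1 :: (if 0 < count_mem (smallest l).+1 l then [::] else [:: 0; 0])
             ++ rem (smallest l) l).
Definition g2 (s : seq nat) := sort geq ((key s).-1 :: rem (key s) (filter pos s)).

Lemma cnt_h2 x l : count_mem x (h2 l) =
  ((smallest l).+1 == x) + (if 0 < count_mem (smallest l).+1 l then 0 else (0 == x) * 2)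
  + (count_mem x l - (x == smallest l)).
Proof.
rewrite /h2 cnt_sort /= count_cat cnt_rem; case: ifP => _ /=; first by rewrite addn0.
by case: (0 == x) => /=; lia.
Qed.

Lemma cnt_g2 x s : count_mem x (g2 s) =
  ((key s).-1 == x) + ((if 0 < x then count_mem x s else 0) - (x == key s)).
Proof. by rewrite /g2 cnt_sort /= cnt_rem cnt_filter. Qed.

Lemma sorted_h2 l : sorted geq (h2 l).
Proof. by rewrite /h2; apply: sort_sorted => a b; apply: leq_total. Qed.
Lemma sorted_g2 l : sorted geq (g2 l).
Proof. by rewrite /g2; apply: sort_sorted => a b; apply: leq_total. Qed.

Lemma c2_fwd n s : is_partition0 n.+1 s -> Dp s -> key s != 1 ->
  (is_partition n (g2 s) && uniq (g2 s)) /\ h2 (g2 s) = s.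
Proof.
move=> /andP[hs /eqP hsum] hd hk.
have [dz dm du] := Dp_facts hs hd.
have sp : 0 < sumn s by rewrite hsum.
have [k0 kc km] := key_facts hs sp.
have kin : key s \in filter pos s by apply: in_cnt; rewrite cnt_filter /pos k0.
have sr := sumn_rem kin; rewrite sumn_pos hsum in sr.
have cg := cnt_g2 ^~ s.
have sg : sumn (g2 s) = (key s).-1 + sumn (rem (key s) (filter pos s)) by rewrite /g2 sumn_sort.
move: (key s) hk k0 kc km kin sr cg sg => k hk k0 kc km kin sr cg sg.
move: dz dm du; move: (smallest s) => z dz dm du.
have k2 : 1 < k by lia.
have zk : z <= k := dm k kc.
have hz : z = 0 \/ z = k.
  case: (posnP z) => [->|zp]; [by left | right].
  have := km z zp; rewrite dz => /(_ isT); lia.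
have ck1 : count_mem k.-1 s = 0.
  case: (ltnP 0 (count_mem k.-1 s)) => h; last by move: h; gen_cnt; lia.
  have kp : 0 < k.-1 by lia.
  by have := km _ kp h; lia.
have c0 : count_mem 0 (g2 s) = 0 by rewrite cg; case: (k.-1 =P 0) => //; lia.
have sm : sumn (g2 s) = n by rewrite sg; move: sr; move: (sumn _) => a; lia.
have ckk : count_mem k s <= 2.
  case: hz => ez; subst z; last by rewrite dz.
  have kn : k != 0 by lia.
  by have := du k kn; gen_cnt; lia.
have hu : uniq (g2 s).
  apply/uniq_cnt => x; rewrite cg; have := du x; move: ck1 ckk.
  case: hz => ez; subst z; cs; repeat case: ifP; gen_cnt; lia.
split; first by rewrite /is_partition sorted_g2 (proj2 (posP _) c0) sm eqxx.
have smg : smallest (g2 s) = k.-1.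
  apply: sm_char; [exact: sorted_g2 | by rewrite cg eqxx | ].
  move=> x; rewrite cg; have := km x; move: k2; cs; repeat case: ifP; gen_cnt; lia.
apply: sorted_cnt_eq; [exact: sorted_h2 | exact: hs | ].
have clk : count_mem k (g2 s) = count_mem k s - 1.
  by rewrite cg (_ : 0 < k); [move: k2; clear; lia | lia].
move=> x; rewrite cnt_h2 smg (prednK (ltnW k2)) clk cg.
have xk1 : (x == k.-1) = (k.-1 == x) by rewrite eq_sym.
rewrite xk1.
case: hz => ez; subst z.
- have kn : k != 0 by lia.
  have ck : count_mem k s = 1 by have := du k kn; move: kc; gen_cnt; lia.
  rewrite ck /=.
  case: (x =P 0) => [->|x0] /=.
    by rewrite dz; move: k2; clear; lia.
  rewrite (_ : 0 < x); last by move: x0; clear; lia.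
  case: (x =P k) => [->|xk] /=.
    by rewrite ck; move: k2; clear; lia.
  case: (k.-1 =P x) => [<-|xk1'] /=.
    by rewrite ck1; move: k2; clear; lia.
  rewrite (_ : (k == x) = false); last by apply/eqP => e; apply: xk.
  rewrite (_ : (0 == x) = false); last by apply/eqP => e; apply: x0.
  try (rewrite (_ : (x == k) = false); last by apply/eqP).
  by move: (count_mem x s) => c; clear; lia.
- have cz0 : count_mem 0 s = 0.
    case: (ltnP 0 (count_mem 0 s)) => h; last by move: h; gen_cnt; lia.
    by have := dm 0 h; lia.
  rewrite dz /=.
  case: (x =P 0) => [->|x0] /=.
    by rewrite cz0; move: k2; clear; lia.
  rewrite (_ : 0 < x); last by move: x0; clear; lia.
  case: (x =P k) => [->|xk] /=.
    by rewrite dz; move: k2; clear; lia.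
  case: (k.-1 =P x) => [<-|xk1'] /=.
    by rewrite ck1; move: k2; clear; lia.
  rewrite (_ : (k == x) = false); last by apply/eqP => e; apply: xk.
  try (rewrite (_ : (x == k) = false); last by apply/eqP).
  by move: (count_mem x s) => c; clear; lia.
Qed.

Lemma c2_bwd n l : 0 < n -> is_partition n l -> uniq l ->
  [&& is_partition0 n.+1 (h2 l), Dp (h2 l) & key (h2 l) != 1] /\ g2 (h2 l) = l.
Proof.
move=> n0 hp /uniq_cnt hu.
have p0 := part_pos hp; case/and3P: hp => hs _ /eqP hsum.
have hn : l != [::] by apply/negP => /eqP e; move: hsum n0; rewrite e /= => <-.
have [kc km] := sm_facts hs hn.
have kin : smallest l \in l by apply: in_cnt.
have sr := sumn_rem kin; rewrite hsum in sr.
have ch := cnt_h2 ^~ l.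
have sh : sumn (h2 l) = (smallest l).+1 + sumn (rem (smallest l) l).
  by rewrite /h2 sumn_sort /= sumn_cat; case: ifP.
move: (smallest l) kc km kin sr ch sh => k kc km kin sr ch sh.
have k0 : 0 < k by case: k kc {km kin sr ch sh} => //; rewrite p0.
have ck : count_mem k l = 1 by have := hu k; move: kc; gen_cnt; lia.
have hsum' : sumn (h2 l) = n.+1 by rewrite sh; move: sr; move: (sumn _) => a; lia.
have big : forall x, x != k.+1 -> 0 < x -> 0 < count_mem x (h2 l) -> k.+1 <= x /\ count_mem x (h2 l) = count_mem x l.
  move=> x xk1 x0; rewrite ch (negbTE (_ : k.+1 != x)); last by rewrite eq_sym.
  rewrite (_ : (0 == x) = false); last by move: x0; clear; lia.
  have := km x; case: (x =P k) => [->|xk].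
    by rewrite ck /=; case: ifP.
  case: ifP => _; move: (count_mem x l) => c; lia.
have hk : key (h2 l) = k.+1.
  apply: key_char; [exact: sorted_h2 | by [] | by rewrite ch eqxx | ].
  move=> x x0 hx; case: (eqVneq x k.+1) => [->//|xk1].
  by have [] := big x xk1 x0 hx.
have hd : Dp (h2 l).
  case hb: (0 < count_mem k.+1 l).
  - have c1 : count_mem k.+1 l = 1 by have := hu k.+1; move: hb; gen_cnt; lia.
    apply: (@Dp_mk _ k.+1); first exact: sorted_h2.
    + by rewrite ch hb c1 eqxx /= (introF eqP (_ : k.+1 <> k)) //; lia.
    + move=> x hx; case: (eqVneq x k.+1) => [->//|xk1].
      case: (posnP x) => [e|x0]; last by have [] := big x xk1 x0 hx.
      by move: hx; rewrite e ch hb p0.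
    + move=> x xk1; case: (posnP x) => [->|x0].
        by rewrite ch hb p0.
      case: (ltnP 0 (count_mem x (h2 l))) => hx; last by move: hx; gen_cnt; lia.
      by have [_ ->] := big x xk1 x0 hx; apply: hu.
  - have c1 : count_mem k.+1 l = 0 by move: hb; gen_cnt; lia.
    apply: (@Dp_mk _ 0); first exact: sorted_h2.
    + by rewrite ch hb p0.
    + by [].
    + move=> x x0; have x0' : 0 < x by move: x0; clear; lia.
      case: (eqVneq x k.+1) => [->|xk1].
        by rewrite ch hb c1 eqxx /= (introF eqP (_ : k.+1 <> k)) //; lia.
      case: (ltnP 0 (count_mem x (h2 l))) => hx; last by move: hx; gen_cnt; lia.
      by have [_ ->] := big x xk1 x0' hx; apply: hu.
split; first by rewrite /is_partition0 sorted_h2 hsum' hd hk /=; lia.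
apply: sorted_cnt_eq; [exact: sorted_g2 | exact: hs | ].
move=> x; rewrite cnt_g2 hk /=.
case: (posnP x) => [->|x0].
  by rewrite p0 /= (introF eqP (_ : k <> 0)) //; lia.
case: (eqVneq x k) => [->|xk].
  rewrite ch ck; move: k0; cs; case: ifP => _; lia.
case: (eqVneq x k.+1) => [->|xk1].
  rewrite ch; move: k0; cs; case: ifP => _; move: (count_mem k.+1 l) => c; lia.
rewrite ch; move: x0 xk xk1; cs; case: ifP => _; gen_cnt; lia.
Qed.


Lemma DA n : 0 < n -> D n.+1 = 2 * A n.
Proof.
move=> n0; rewrite mul2n -addnn /D /npart (count_split _ (fun s => key s == 1)).
congr (_ + _).
- apply: (count_bij (f := g1) (g := h1)); rewrite ?uniq_bs //.
  + by move=> x /andP[/andP[h1 h2] _]; apply: Dpart_in h1 h2.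
  + by move=> y /andP[h1 _]; apply: part_in.
  + by move=> x /andP[/andP[h1 h2] h3]; exact: c1_fwd h1 h2 h3.
  + move=> y /andP[h1 h2]; have [/and3P[k1 k2 k3] k4] := c1_bwd n0 h1 h2.
    by rewrite /Dp in k2; rewrite k1 k2 k3 k4.
- apply: (count_bij (f := g2) (g := h2)); rewrite ?uniq_bs //.
  + by move=> x /andP[/andP[h1 h2] _]; apply: Dpart_in h1 h2.
  + by move=> y /andP[h1 _]; apply: part_in.
  + by move=> x /andP[/andP[h1 h2] h3]; exact: c2_fwd h1 h2 h3.
  + move=> y /andP[h1 h2]; have [/and3P[k1 k2 k3] k4] := c2_bwd n0 h1 h2.
    by rewrite /Dp in k2; rewrite k1 k2 k3 k4.
Qed.

Theorem theorem7 (n : nat) (hn : 0 < n) :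
  [/\ A n = B n, B n = C n.+1, D n.+1 = 2 * C n.+1,
      C n.+1 = E n.+2 & E n.+2 = F n.+1].
Proof.
have ab := AB n; have bf := BF hn; have ef := EF hn; have cf := CF n.+1.
have da := DA hn.
split.
- exact: ab.
- by rewrite bf cf.
- by rewrite da ab bf cf.
- by rewrite cf ef.
- exact: ef.
Qed.
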